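(* Let $\mathbb{X}$ be a finite subset of the projective space $\mathbb{P}^{s-1}$ over a field $K$, and let $I(\mathbb{X})\subset S=K[t_1,\ldots,t_s]$ be its vanishing ideal. If $0\neq f\in S$ is homogeneous, then $$|V_{\mathbb{X}}(f)|=\begin{cases}\deg(S/(I(\mathbb{X}),f)) & \text{if } (I(\mathbb{X})\colon f)\neq I(\mathbb{X}),\\ 0 & \text{if } (I(\mathbb{X})\colon f)=I(\mathbb{X}).\end{cases}$$
   Context: $I(\mathbb{X})$ is the ideal generated by all homogeneous polynomials vanishing at every point of $\mathbb{X}$. $V_{\mathbb{X}}(f)$ is the set of points $[\alpha]\in\mathbb{X}$ with $f(\alpha)=0$. $(I\colon f)=\{h\in S: hf\in I\}$. For a graded ideal $J$ with Hilbert function $H_J(d)=\dim_K(S_d/J_d)$ and $k=\dim(S/J)$, $\deg(S/J)=(k-1)!\lim_{d\to\infty}H_J(d)/d^{k-1}$ if $k\geq 1$ and $\dim_K(S/J)$ if $k=0$. *)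

(* Defs.v *)
From mathcomp Require Import all_boot all_algebra.
From mathcomp Require Import mpoly.
From Stdlib Require Import ClassicalEpsilon.
Set Implicit Arguments. Unset Strict Implicit. Unset Printing Implicit Defensive.
Import GRing.Theory Num.Theory.
Local Open Scope ring_scope.

Section Defs.
Variables (K : fieldType) (n : nat).
Local Notation S := {mpoly K[n]}.

Definition homogeneous (f : S) : Prop := exists d : nat, f \is d.-homog.

Definition ideal_gen (P : S -> Prop) : S -> Prop :=
  fun g => exists r : seq (S * S),
    (forall p, p \in r -> P p.2) /\ g = \sum_(p <- r) p.1 * p.2.

(* I(X): ideal generated by all homogeneous polynomials vanishing at every
   point of X (X given by representatives alpha in K^n) *)
Definition vanishing_ideal (X : seq {ffun 'I_n -> K}) : S -> Prop :=
  ideal_gen (fun g => homogeneous g /\ forall a, a \in X -> g.@[a] = 0).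

Definition ideal_add (I : S -> Prop) (f : S) : S -> Prop :=
  ideal_gen (fun g => I g \/ g = f).

Definition colon (I : S -> Prop) (f : S) : S -> Prop := fun h => I (h * f).

Definition proportional (a b : {ffun 'I_n -> K}) : Prop :=
  exists c : K, forall i, b i = c * a i.

(* X is a (finite) set of points of P^{n-1}, given by one representative each *)
Definition proj_points (X : seq {ffun 'I_n -> K}) : Prop :=
  (forall a, a \in X -> a != [ffun => 0]) /\
  (forall a b, a \in X -> b \in X -> proportional a b -> a = b) /\ uniq X.

Definition card_zeros (X : seq {ffun 'I_n -> K}) (f : S) : nat :=
  count (fun a : {ffun 'I_n -> K} => f.@[a] == 0) X.

(* b is a family whose classes form a K-basis of (Q)/J, where Q is the
   K-subspace of S given by the predicate Q *)
Definition quot_basis (Q : S -> Prop) (J : S -> Prop) (b : seq S) : Prop :=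
  (forall p, p \in b -> Q p) /\
  (forall c : 'I_(size b) -> K,
      J (\sum_(i < size b) c i *: b`_i) -> forall i, c i = 0) /\
  (forall g, Q g -> exists c : 'I_(size b) -> K,
      J (g - \sum_(i < size b) c i *: b`_i)).

(* H_J(d) = dim_K (S_d / J_d) *)
Definition hilbert_fun (J : S -> Prop) (d : nat) : nat :=
  epsilon (inhabits 0%N)
    (fun m => exists b, size b = m /\ quot_basis (fun g => g \is d.-homog) J b).

Definition quot_dim_is (J : S -> Prop) (e : nat) : Prop :=
  exists b, size b = e /\ quot_basis (fun _ => True) J b.

Definition is_ideal (P : S -> Prop) : Prop :=
  P 0 /\ (forall a b, P a -> P b -> P (a + b)) /\ (forall r a, P a -> P (r * a)).
Definition is_prime (P : S -> Prop) : Prop :=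
  is_ideal P /\ ~ P 1 /\ (forall a b, P (a * b) -> P a \/ P b).

(* a chain P_0 < P_1 < ... < P_k of primes of S containing J,
   i.e. a chain of primes of S/J of length k *)
Definition has_prime_chain (J : S -> Prop) (k : nat) : Prop :=
  exists Ps : nat -> S -> Prop,
    (forall i, (i <= k)%N -> is_prime (Ps i) /\ forall x, J x -> Ps i x) /\
    (forall i, (i < k)%N ->
       (forall x, Ps i x -> Ps i.+1 x) /\ exists x, Ps i.+1 x /\ ~ Ps i x).

Definition krull_dim_is (J : S -> Prop) (k : nat) : Prop :=
  has_prime_chain J k /\ ~ has_prime_chain J k.+1.

Definition cvg_rat (u : nat -> rat) (l : rat) : Prop :=
  forall eps : rat, 0 < eps -> exists N : nat, forall d, (N <= d)%N -> `|u d - l| < eps.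

(* deg(S/J) = e, with k = dim(S/J):
   k >= 1 : (k-1)! * lim_{d -> oo} H_J(d) / d^(k-1) = e
   k = 0  : dim_K(S/J) = e *)
Definition degree_is (J : S -> Prop) (e : nat) : Prop :=
  exists k : nat, krull_dim_is J k /\
    (if k is k'.+1 then
       cvg_rat (fun d => (k'`!)%:R * (hilbert_fun J d)%:R / (d%:R ^+ k')) e%:R
     else quot_dim_is J e).

End Defs.

(* Main.v *)
Require Import Defs.
From mathcomp Require Import all_boot all_algebra.
From mathcomp Require Import mpoly.
From Stdlib Require Import Classical ClassicalEpsilon.
Set Implicit Arguments. Unset Strict Implicit. Unset Printing Implicit Defensive.
Import GRing.Theory Num.Theory.
Local Open Scope ring_scope.

Section Work.
Variables (K : fieldType) (n : nat).
Local Notation S := {mpoly K[n]}.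
Implicit Types (P : S -> Prop) (g h : S).

Lemma ig_gen P g : P g -> ideal_gen P g.
Proof. by move=> Pg; exists [:: (1, g)]; rewrite big_seq1 mul1r; split => // p; rewrite inE => /eqP ->. Qed.

Lemma ig0 P : ideal_gen P 0.
Proof. by exists [::]; rewrite big_nil. Qed.

Lemma igD P g h : ideal_gen P g -> ideal_gen P h -> ideal_gen P (g + h).
Proof.
move=> [r1 [H1 ->]] [r2 [H2 ->]]; exists (r1 ++ r2); rewrite big_cat; split => //.
by move=> p; rewrite mem_cat => /orP[/H1|/H2].
Qed.

Lemma igM P r g : ideal_gen P g -> ideal_gen P (r * g).
Proof.
move=> [s [Hs ->]]; exists [seq (r * p.1, p.2) | p <- s]; split.
  by move=> p /mapP [q qs ->]; apply: (Hs q qs).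
by rewrite big_map mulr_sumr; apply: eq_bigr => p _; rewrite mulrA.
Qed.

Lemma igN P g : ideal_gen P g -> ideal_gen P (- g).
Proof. by move=> H; rewrite -mulN1r; apply: igM. Qed.

Lemma igB P g h : ideal_gen P g -> ideal_gen P h -> ideal_gen P (g - h).
Proof. by move=> ? ?; apply: igD => //; apply: igN. Qed.

Lemma igZ P c g : ideal_gen P g -> ideal_gen P (c *: g).
Proof. by rewrite -mul_mpolyC; apply: igM. Qed.

Lemma ig_sum P (I : eqType) (r : seq I) (F : I -> S) :
  (forall i, i \in r -> ideal_gen P (F i)) -> ideal_gen P (\sum_(i <- r) F i).
Proof.
elim: r => [|a r IH] H; first by rewrite big_nil; apply: ig0.
rewrite big_cons; apply: igD; first by apply: H; rewrite inE eqxx.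
by apply: IH => i ir; apply: H; rewrite inE ir orbT.
Qed.

Lemma ig_ind P (Q : S -> Prop) : Q 0 -> (forall g h, Q g -> Q h -> Q (g + h)) ->
  (forall r g, P g -> Q (r * g)) -> forall g, ideal_gen P g -> Q g.
Proof.
move=> Q0 QD QM g [s [Hs ->]]; elim: s Hs => [|a s IH] Hs; first by rewrite big_nil.
rewrite big_cons; apply: QD; first by apply: QM; apply: Hs; rewrite inE eqxx.
by apply: IH => p ps; apply: Hs; rewrite inE ps orbT.
Qed.


Lemma pihomog_mulr e k r g : g \is e.-homog ->
  pihomog mdeg k (r * g) = if (e <= k)%N then pihomog mdeg (k - e) r * g else 0.
Proof.
move=> hg; elim/mpolyind: r => [|c m p _ _ IH].
  by rewrite mul0r linear0; case: ifP => //; rewrite linear0 mul0r.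
rewrite mulrDl pihomogD IH -scalerAl linearZ /=.
have hm : 'X_[m] * g \is (mdeg m + e).-homog by apply: dhomogM => //; rewrite dhomogX.
case: (boolP (mdeg m + e == k)%N) => [/eqP Hk|Hk].
  rewrite pihomog_dE -?Hk // leq_addl linearD /= linearZ /= pihomogX addnK eqxx.
  by rewrite mulrDl scalerAl.
rewrite (pihomog_ne0 Hk hm) scaler0 add0r; case: ifP => // lek.
rewrite linearD linearZ /= pihomogX.
have -> : (mdeg m == k - e)%N = false.
  by apply/negbTE; apply: contra Hk => /eqP ->; rewrite subnK.
by rewrite scaler0 add0r.
Qed.

Variable X : seq {ffun 'I_n -> K}.
Local Notation I := (vanishing_ideal X).

Lemma I_vanish g a : I g -> a \in X -> g.@[a] = 0.
Proof.
move=> Ig aX; move: g Ig; apply: ig_ind; first by rewrite meval0.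
  by move=> g h Hg Hh; rewrite mevalD Hg Hh addr0.
by move=> r g [_ Hg]; rewrite mevalM Hg // mulr0.
Qed.

Lemma J_vanish f g a : ideal_add I f g -> a \in X -> f.@[a] = 0 -> g.@[a] = 0.
Proof.
move=> Jg aX fa; move: g Jg; apply: ig_ind; first by rewrite meval0.
  by move=> g h Hg Hh; rewrite mevalD Hg Hh addr0.
move=> r g [Ig|->]; rewrite mevalM ?fa ?mulr0 //.
by rewrite (I_vanish Ig aX) mulr0.
Qed.

Lemma I_homog d g : g \is d.-homog -> (forall a, a \in X -> g.@[a] = 0) -> I g.
Proof. by move=> hg H; apply: ig_gen; split => //; exists d. Qed.

Lemma I_comp g : I g -> forall k a, a \in X -> (pihomog mdeg k g).@[a] = 0.
Proof.
move: g; apply: ig_ind.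
- by move=> k a _; rewrite linear0 meval0.
- by move=> g h Hg Hh k a aX; rewrite linearD mevalD Hg // Hh // addr0.
move=> r g [[e he] Hg] k a aX; rewrite (pihomog_mulr _ _ he).
by case: ifP => _; rewrite ?meval0 // mevalM Hg // mulr0.
Qed.

Lemma I_of_comp g : (forall k a, a \in X -> (pihomog mdeg k g).@[a] = 0) -> I g.
Proof.
move=> H; rewrite (pihomog_partitionE (k := msize g) (mf := mdeg) (leqnn _)).
rewrite -(big_mkord xpredT (fun k => pihomog mdeg k g)).
apply: ig_sum => k _; apply: (@I_homog k); first exact: pihomogP.
exact: H.
Qed.


Lemma homogXU i : ('X_i : S) \is 1.-homog.
Proof. by rewrite dhomogX; apply/eqP; exact: mdeg1. Qed.

Lemma mevalXn (v : 'I_n -> K) g k : (g ^+ k).@[v] = g.@[v] ^+ k.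
Proof. by elim: k => [|k IH]; rewrite ?expr0 ?meval1 // !exprS mevalM IH. Qed.

Lemma pt_idx (p : {ffun 'I_n -> K}) : p != [ffun => 0] -> exists i, p i != 0.
Proof.
move=> Hp; apply: NNPP => H; apply/negP: Hp; rewrite negbK; apply/eqP/ffunP => i.
by rewrite ffunE; apply: NNPP => Hi; apply: H; exists i; apply/eqP.
Qed.

Lemma sep_form (p q : {ffun 'I_n -> K}) : p != [ffun => 0] -> ~ proportional p q ->
  exists L : S, L \is 1.-homog /\ L.@[q] = 0 /\ L.@[p] != 0.
Proof.
move=> /pt_idx [i pi] Hpq.
have [j Hj] : exists j, q j * p i != q i * p j.
  apply: NNPP => H; apply: Hpq; exists (q i / p i) => j.
  have /eqP E : q j * p i == q i * p j by apply: NNPP => H'; apply: H; exists j; apply/negP.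
  by rewrite mulrAC -E mulfK.
exists (q i *: 'X_j - q j *: 'X_i); split; first by rewrite rpredB ?rpredZ ?homogXU.
rewrite !mevalB !mevalZ !mevalXU; split; first by rewrite mulrC subrr.
by rewrite subr_eq0 eq_sym.
Qed.

Lemma prod_forms (p : {ffun 'I_n -> K}) (Z : seq {ffun 'I_n -> K}) :
  (forall q, q \in Z -> q != p -> exists L : S, L \is 1.-homog /\ L.@[q] = 0 /\ L.@[p] != 0) ->
  exists G : S, G \is (count (predC1 p) Z).-homog /\ G.@[p] != 0 /\
    forall q, q \in Z -> q != p -> G.@[q] = 0.
Proof.
elim: Z => [|z Z IH] H.
  by exists 1; rewrite dhomog1 meval1 oner_neq0; split.
have [|G [hG [Gp GZ]]] := IH; first by move=> q qZ; apply: H; rewrite inE qZ orbT.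
case: (eqVneq z p) => [->|nzp].
  exists G; rewrite /= eqxx /=; split => //; split => // q.
  by rewrite inE => /orP[/eqP ->|qZ qp]; [rewrite eqxx|exact: GZ].
have [L [hL [Lz Lp]]] := H z (mem_head _ _) nzp.
exists (L * G); rewrite /= nzp /= add1n; split.
  by rewrite -add1n; apply: dhomogM.
rewrite mevalM mulf_neq0 //; split => // q; rewrite inE => /orP[/eqP ->|qZ qp].
  by rewrite mevalM Lz mul0r.
by rewrite mevalM GZ // mulr0.
Qed.

Lemma interp (p : {ffun 'I_n -> K}) m :
  proj_points X -> p \in X -> (size X <= m)%N ->
  exists g : S, g \is m.-homog /\ g.@[p] = 1 /\ forall q, q \in X -> q != p -> g.@[q] = 0.
Proof.
move=> [Hnz [Hprop _]] pX Hm.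
have [|G [hG [Gp GZ]]] := @prod_forms p X.
  move=> q qX qp; apply: sep_form; first exact: Hnz.
  by move=> Hpq; move/eqP: qp; apply; apply/esym; exact: Hprop Hpq.
have [i pi] := pt_idx (Hnz p pX).
set c := count (predC1 p) X.
have cm : (c <= m)%N by apply: leq_trans (count_size _ _) Hm.
exists ((G.@[p] * p i ^+ (m - c))^-1 *: (G * 'X_i ^+ (m - c))); split.
  apply: rpredZ; have HX := dhomogMn (m - c) (homogXU i).
  by have := dhomogM hG HX; rewrite mul1n subnKC.
rewrite mevalZ mevalM mevalXn mevalXU mulVf ?mulf_neq0 ?expf_neq0 //; split => // q qX qp.
by rewrite mevalZ mevalM (GZ q qX qp) mul0r mulr0.
Qed.


Lemma zero_colon f e p : f \is e.-homog -> proj_points X -> p \in X -> f.@[p] = 0 ->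
  ~ (forall h, colon I f h <-> I h).
Proof.
move=> hf PX pX fp H.
have [g [hg [gp g0]]] := interp PX pX (leqnn (size X)).
have : I g.
  apply/H; rewrite /colon; apply: (@I_homog (size X + e)); first exact: dhomogM.
  move=> a aX; rewrite mevalM; case: (eqVneq a p) => [->|ap]; first by rewrite fp mulr0.
  by rewrite g0 // mul0r.
by move/I_vanish => /(_ p pX); rewrite gp => /eqP; rewrite oner_eq0.
Qed.

Lemma nozero_colon f e : f \is e.-homog -> (forall p, p \in X -> f.@[p] != 0) ->
  forall h, colon I f h <-> I h.
Proof.
move=> hf Hf h; rewrite /colon; split => Ih; last by rewrite mulrC; apply: igM.
apply: I_of_comp => k a aX.
have := I_comp Ih (k + e) aX; rewrite (pihomog_mulr _ _ hf) leq_addl addnK mevalM.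
by move/eqP; rewrite mulf_eq0 (negbTE (Hf a aX)) orbF => /eqP.
Qed.

Lemma kernel_prime (D : idomainType) (phi : {rmorphism S -> D}) :
  is_prime (fun g => phi g = 0).
Proof.
split; [split; [exact: rmorph0|split]|split].
- by move=> a b Ha Hb; rewrite rmorphD Ha Hb addr0.
- by move=> r a Ha; rewrite rmorphM Ha mulr0.
- by rewrite rmorph1 => /eqP; rewrite oner_eq0.
by move=> a b; rewrite rmorphM => /eqP; rewrite mulf_eq0 => /orP[] /eqP; [left|right].
Qed.

Lemma ker_ig (D : pzRingType) (phi : {rmorphism S -> D}) P :
  (forall g, P g -> phi g = 0) -> forall g, ideal_gen P g -> phi g = 0.
Proof.
move=> H; apply: ig_ind; first exact: rmorph0.
  by move=> g h Hg Hh; rewrite rmorphD Hg Hh addr0.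
by move=> r g Pg; rewrite rmorphM (H g Pg) mulr0.
Qed.

Lemma mmap_homog (a : {ffun 'I_n -> K}) d g : g \is d.-homog ->
  mmap (@polyC K) (fun i => (a i)%:P * 'X) g = (g.@[a])%:P * 'X ^+ d.
Proof.
move=> /dhomogP hg; rewrite /mmap (mevalE a g) rmorph_sum mulr_suml.
apply: eq_big_seq => m mm; rewrite /mmap1.
have E : \prod_(i < n) ((a i)%:P * 'X) ^+ m i = (\prod_(i < n) a i ^+ m i)%:P * 'X ^+ d.
  under eq_bigr do rewrite exprMn.
  rewrite big_split /= prodrXr rmorph_prod; congr (_ * _).
    by apply: eq_bigr => i _; rewrite rmorphXn.
  by rewrite -(hg m mm) /= mdegE.
by rewrite E rmorphM mulrA.
Qed.


Lemma idealB P : is_ideal P -> forall a b, P a -> P b -> P (a - b).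
Proof.
move=> [_ [HD HM]] a b Ha Hb; apply: HD => //.
by rewrite -mulN1r; apply: HM.
Qed.

Lemma chain1 f e p0 : f \is e.-homog -> p0 \in X -> f.@[p0] = 0 ->
  p0 != [ffun => 0] -> has_prime_chain (ideal_add I f) 1.
Proof.
move=> hf p0X fp0 p0nz.
pose phi0 : {rmorphism S -> {poly K}} := mmap (@polyC K) (fun i => (p0 i)%:P * 'X).
pose phi1 : {rmorphism S -> K} := horner_eval 0 \o phi0.
have J0 : forall g, ideal_add I f g -> phi0 g = 0.
  apply: ker_ig => g [Ig|->]; last by rewrite /phi0 /= (mmap_homog _ hf) fp0 polyC0 mul0r.
  apply: (ker_ig _ Ig) => h [[d hd] Hh].
  by rewrite /phi0 /= (mmap_homog _ hd) Hh // polyC0 mul0r.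
have [i pi] := pt_idx p0nz.
have phiX : phi0 'X_i = (p0 i)%:P * 'X by rewrite /phi0 /= (mmap_homog _ (homogXU i)) mevalXU expr1.
exists (fun k => if k == 0%N then (fun g => phi0 g = 0) else (fun g => phi1 g = 0)); split.
  move=> k _; case: (k == 0%N); (split; first exact: kernel_prime).
    exact: J0.
  by move=> x Jx; rewrite /phi1 /= J0 // horner_evalE horner0.
move=> k; rewrite ltnS leqn0 => /eqP -> /=; split.
  by move=> x Hx; rewrite /phi1 /= Hx horner_evalE horner0.
exists 'X_i; rewrite /phi1 /= phiX horner_evalE hornerCM hornerX mulr0; split => //.
by apply/eqP; rewrite mulf_neq0 ?polyC_eq0 ?polyX_eq0.
Qed.

Lemma univ (Q1 Q2 : {poly K} -> Prop) :
  (forall r a, Q1 a -> Q1 (r * a)) -> (forall a b, Q1 (a * b) -> Q1 a \/ Q1 b) ->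
  (forall a, Q1 a -> Q2 a) -> (forall a b, Q2 a -> Q2 b -> Q2 (a + b)) ->
  (forall r a, Q2 a -> Q2 (r * a)) -> ~ Q2 1 ->
  forall w b, Q1 w -> w != 0 -> Q2 b -> ~ Q1 b -> False.
Proof.
move=> Q1M Q1P Q12 Q2D Q2M nQ21 w b Q1w wn0 Q2b nQ1b.
have bn0 : b != 0.
  by apply/eqP => b0; apply: nQ1b; rewrite b0 -(mul0r w); apply: Q1M.
suff H : forall s (w' : {poly K}), (size w' <= s)%N -> Q1 w' -> w' != 0 -> False.
  exact: (H _ w (leqnn _) Q1w wn0).
elim => [|s IH] w' sw Q1w' wn0'.
  by move: sw; rewrite leqn0 size_poly_eq0 => /eqP w0; rewrite w0 eqxx in wn0'.
case: (boolP (coprimep w' b)) => [/Bezout_eq1_coprimepP [u Hu]|].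
  apply: nQ21; rewrite -Hu; apply: Q2D; last exact: Q2M.
  by apply: Q12; apply: Q1M.
case/(Bezout_coprimepPn wn0' bn0) => uv /and3P [/andP [s1 _] s2 s3] Huv.
have : Q1 (uv.2 * b) by rewrite -Huv; apply: Q1M.
case/Q1P => // Hu2; apply: (IH uv.2) => //; last by rewrite -size_poly_gt0.
by rewrite -ltnS; apply: leq_trans sw.
Qed.


Lemma no_chain2 f : (forall a, a \in X -> a != [ffun => 0]) ->
  ~ has_prime_chain (ideal_add I f) 2.
Proof.
move=> Hnz [Ps [H1 H2]].
have [pr0 J0] := H1 0%N isT; have [pr1 J1] := H1 1%N isT; have [pr2 J2] := H1 2%N isT.
have [sub01 [x1 [P1x1 nP0x1]]] := H2 0%N isT.
have [sub12 [x2 [P2x2 nP1x2]]] := H2 1%N isT.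
have I0 : forall g, I g -> Ps 0%N g by move=> g Ig; apply: J0; apply: ig_gen; left.
have [id0 [n01 pp0]] := pr0; have [id1 [n11 pp1]] := pr1; have [id2 [n21 pp2]] := pr2.
have [q [qX Hq]] : exists q, q \in X /\
    forall L : S, L \is 1.-homog -> L.@[q] = 0 -> Ps 0%N L.
  apply: NNPP => Hn.
  have Hall : forall q, q \in X -> exists L : S, L \is 1.-homog /\ L.@[q] = 0 /\ ~ Ps 0%N L.
    move=> q qX; apply: NNPP => Hq; apply: Hn; exists q; split => // L hL Lq.
    by apply: NNPP => HL; apply: Hq; exists L.
  have : forall Z, {subset Z <= X} -> exists G : S, G \is (size Z).-homog /\
      (forall q, q \in Z -> G.@[q] = 0) /\ ~ Ps 0%N G.
    elim => [|z Z IH] sub; first by exists 1; rewrite dhomog1.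
    have [|G [hG [GZ nG]]] := IH; first by move=> x xZ; apply: sub; rewrite inE xZ orbT.
    have [L [hL [Lz nL]]] := Hall z (sub z (mem_head _ _)).
    exists (L * G); split; first by rewrite /= -add1n; apply: dhomogM.
    split; last by case/pp0.
    move=> x; rewrite inE => /orP[/eqP ->|xZ]; rewrite mevalM ?Lz ?mul0r //.
    by rewrite GZ // mulr0.
  case/(_ X (fun x xX => xX)) => G [hG [GX nG]]; apply: nG; apply: I0.
  exact: (I_homog hG).
have [i qi] := pt_idx (Hnz q qX).
pose a := [ffun j => q j / q i].
pose phi : {rmorphism S -> {poly K}} := mmap (@polyC K) (fun j => (a j)%:P * 'X).
pose psi : {rmorphism {poly K} -> S} := horner_eval ('X_i : S) \o map_poly (@mpolyC n K).
have psiC c : psi c%:P = c%:MP by rewrite /psi /= horner_evalE map_polyC hornerC.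
have psiX : psi 'X = 'X_i by rewrite /psi /= horner_evalE map_polyX hornerX.
pose T g := Ps 0%N (g - psi (phi g)).
have TD g h : T g -> T h -> T (g + h).
  by rewrite /T !rmorphD opprD addrACA; case: id0 => _ [HD _]; apply: HD.
have TM g h : T g -> T h -> T (g * h).
  move=> Tg Th; rewrite /T !rmorphM.
  have -> : g * h - psi (phi g) * psi (phi h) =
      h * (g - psi (phi g)) + psi (phi g) * (h - psi (phi h)).
    by rewrite [h * _]mulrC mulrBl mulrBr addrA subrK.
  by case: id0 => _ [HD HM]; apply: HD; apply: HM.
have T1 : T 1 by rewrite /T !rmorph1 subrr; case: id0.
have phiC c : phi c%:MP = c%:P by exact: mmapC.
have phiX j : phi 'X_j = (a j)%:P * 'X.
  by rewrite /phi /= (mmap_homog _ (homogXU j)) expr1 mevalXU.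
have TC c : T c%:MP by rewrite /T phiC psiC subrr; case: id0.
have TX j : T 'X_j.
  rewrite /T phiX rmorphM psiC psiX.
  apply: Hq; first by rewrite mul_mpolyC rpredB ?rpredZ ?homogXU.
  by rewrite mevalB mevalM mevalC !mevalXU /a ffunE divfK // subrr.
have Key g : T g.
  elim/mpolyind: g => [|c m p _ _ IH]; first by rewrite /T !rmorph0 subrr; case: id0.
  apply: (TD) => //; rewrite -mul_mpolyC; apply: (TM) => //.
  rewrite mpolyXE_id; apply: (big_ind T) => [//|g h|x _]; [exact: TM|]; elim: (m x) => [|k IHk].
    by rewrite expr0.
  by rewrite exprS; apply: TM.
have eqv k : (k <= 2)%N -> forall g, Ps k g <-> Ps k (psi (phi g)).
  move=> k2; have [[idk _] _] := H1 k k2.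
  have sub0 : forall x, Ps 0%N x -> Ps k x.
    move: k2 {idk}; case: k => [|[|[|]]] //= _ x Hx;
      first [exact: Hx | exact: sub01 Hx | exact: sub12 (sub01 x Hx)].
  move=> g; split => Hg.
    have -> : psi (phi g) = g - (g - psi (phi g)) by rewrite opprB addrC subrK.
    by apply: idealB => //; apply: sub0; apply: Key.
  have -> : g = (g - psi (phi g)) + psi (phi g) by rewrite subrK.
  by case: idk => _ [HD _]; apply: HD => //; apply: sub0; apply: Key.
apply: (@univ (fun u => Ps 1%N (psi u)) (fun u => Ps 2%N (psi u)) _ _ _ _ _ _ (phi x1) (phi x2)).
- by move=> r u Hu; rewrite rmorphM; case: id1 => _ [_ HM]; apply: HM.
- by move=> u v; rewrite rmorphM; apply: pp1.
- by move=> u Hu; apply: sub12.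
- by move=> u v Hu Hv; rewrite rmorphD; case: id2 => _ [HD _]; apply: HD.
- by move=> r u Hu; rewrite rmorphM; case: id2 => _ [_ HM]; apply: HM.
- by rewrite rmorph1.
- exact: (proj1 (eqv 1%N isT x1) P1x1).
- apply/eqP => H0; apply: nP0x1; have := Key x1; rewrite /T H0 rmorph0 subr0 //.
- exact: (proj1 (eqv 2%N isT x2) P2x2).
- by move=> H; apply: nP1x2; apply: (proj2 (eqv 1%N isT x2)).
Qed.


Lemma interp_ev m p : proj_points X -> p \in X -> (size X <= m)%N ->
  exists g : S, g \is m.-homog /\ forall a, a \in X -> g.@[a] = (a == p)%:R.
Proof.
move=> PX pX Hm; have [g [hg [gp g0]]] := interp PX pX Hm.
exists g; split => // b bX; case: (eqVneq b p) => [->|bp]; first by rewrite gp.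
by rewrite g0.
Qed.

Lemma interp_vals m (v : {ffun 'I_n -> K} -> K) (Z : seq {ffun 'I_n -> K}) :
  proj_points X -> (size X <= m)%N -> {subset Z <= X} -> uniq Z ->
  exists h : S, h \is m.-homog /\
    forall a, a \in X -> h.@[a] = if a \in Z then v a else 0.
Proof.
move=> PX Hm; elim: Z => [|z Z IH] sub uZ.
  by exists 0; split => [|a _]; rewrite ?rpred0 ?meval0.
have zX : z \in X by apply: sub; rewrite mem_head.
have sub' : {subset Z <= X} by move=> x xZ; apply: sub; rewrite inE xZ orbT.
have uZ' : uniq Z by case/andP: uZ.
have [h [hh Hh]] := IH sub' uZ'.
have [g [hg Hg]] := interp_ev PX zX Hm.
exists (h + v z *: g); split; first by rewrite rpredD ?rpredZ.
move=> a aX; rewrite mevalD mevalZ Hh // Hg // inE.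
case: (eqVneq a z) => [->|az] /=; last by rewrite mulr0 addr0.
by case/andP: uZ => /negbTE -> _; rewrite mulr1 add0r.
Qed.

Lemma interp_seq m (Z : seq {ffun 'I_n -> K}) :
  proj_points X -> (size X <= m)%N -> {subset Z <= X} ->
  exists b : seq S, size b = size Z /\ (forall p, p \in b -> p \is m.-homog) /\
    forall k a, (k < size Z)%N -> a \in X -> (b`_k).@[a] = (a == Z`_k)%:R.
Proof.
move=> PX Hm; elim: Z => [|z Z IH] sub; first by exists [::].
have zX : z \in X by apply: sub; rewrite mem_head.
have [|b [sb [hb Hb]]] := IH; first by move=> x xZ; apply: sub; rewrite inE xZ orbT.
have [g [hg Hg]] := interp_ev PX zX Hm.
exists (g :: b); split; first by rewrite /= sb.
split; first by move=> p; rewrite inE => /orP[/eqP ->|]; [|apply: hb].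
by move=> [|k] a /=; [move=> _; apply: Hg|rewrite ltnS; apply: Hb].
Qed.

Variables (f : S) (e : nat).
Hypothesis hf : f \is e.-homog.
Hypothesis PX : proj_points X.
Local Notation J := (ideal_add I f).
Local Notation Y := [seq a : {ffun 'I_n -> K} <- X | f.@[a] == 0].

Lemma J_of_vanish d g : (e + size X <= d)%N -> g \is d.-homog ->
  (forall a, a \in X -> f.@[a] = 0 -> g.@[a] = 0) -> J g.
Proof.
move=> Hd hg Hg.
have Hm : (size X <= d - e)%N by rewrite leq_subRL // (leq_trans (leq_addr _ _) Hd).
have ed : (e <= d)%N by apply: leq_trans (leq_addr _ _) Hd.
have [h [hh Hh]] := @interp_vals (d - e) (fun a => g.@[a] / f.@[a])
    [seq a : {ffun 'I_n -> K} <- X | f.@[a] != 0] PX Hm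
    (fun x => ltac:(by rewrite mem_filter => /andP[]))
    (ltac:(by apply: filter_uniq; case: PX => _ [])).
have -> : g = (g - h * f) + h * f by rewrite subrK.
apply: igD; last by apply: igM; apply: ig_gen; right.
apply: ig_gen; left; apply: (@I_homog d).
  by apply: rpredB => //; have := dhomogM hh hf; rewrite subnK.
move=> a aX; rewrite mevalB mevalM Hh // mem_filter aX andbT.
case: (eqVneq (f.@[a]) 0) => [fa|fa] /=; first by rewrite Hg // fa mulr0 subr0.
by rewrite divfK // subrr.
Qed.


Lemma meval_sum (v : 'I_n -> K) (I0 : Type) (r : seq I0) (P0 : pred I0) (F : I0 -> S) :
  (\sum_(i <- r | P0 i) F i).@[v] = \sum_(i <- r | P0 i) (F i).@[v].
Proof. exact: (big_morph _ (mevalD v) (meval0 v)). Qed.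

Lemma uY : uniq Y.
Proof. by apply: filter_uniq; case: PX => _ []. Qed.

Lemma memY a : (a \in Y) = (a \in X) && (f.@[a] == 0).
Proof. by rewrite mem_filter andbC. Qed.

Lemma YX : {subset Y <= X}.
Proof. by move=> a; rewrite memY => /andP[]. Qed.

Lemma nthY (i j : nat) : (i < size Y)%N -> (j < size Y)%N -> (Y`_i == Y`_j) = (i == j).
Proof. by move=> Hi Hj; rewrite nth_uniq // uY. Qed.

Lemma basis_exists d : (e + size X <= d)%N ->
  exists b, size b = size Y /\ quot_basis (fun g => g \is d.-homog) J b.
Proof.
move=> Hd; have Hm : (size X <= d)%N by apply: leq_trans (leq_addl _ _) Hd.
have [b [sb [hb Hb]]] := @interp_seq d Y PX Hm YX.
exists b; split => //; split; first exact: hb.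
split.
  move=> c Jc i.
  have iY : (i < size Y)%N by rewrite -sb.
  have YiX : Y`_i \in X by apply: YX; apply: mem_nth.
  have fYi : f.@[Y`_i] = 0.
    by have := mem_nth 0 iY; rewrite memY => /andP[_ /eqP].
  have := J_vanish Jc YiX fYi; rewrite meval_sum (bigD1 i) //= big1 ?addr0.
    by rewrite mevalZ Hb // eqxx mulr1.
  move=> j ji; rewrite mevalZ Hb //; last by rewrite -sb.
  rewrite nthY // -?sb //; case: eqP => [/val_inj Eij|_]; last by rewrite mulr0.
  by rewrite Eij eqxx in ji.
move=> g hg; exists (fun i => g.@[Y`_i]).
apply: (J_of_vanish Hd).
  apply: rpredB => //; apply: rpred_sum => i _; apply: rpredZ; apply: hb.
  by apply: mem_nth.
move=> a aX fa; have aY : a \in Y by rewrite memY aX fa eqxx.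
have kY : (index a Y < size b)%N by rewrite sb index_mem.
rewrite mevalB meval_sum (bigD1 (Ordinal kY)) //= big1 ?addr0.
  by rewrite mevalZ Hb ?nth_index // -?sb // eqxx mulr1 subrr.
move=> j ji; rewrite mevalZ Hb //; last by rewrite -sb.
rewrite -{1}(nth_index 0 aY) nthY ?index_mem -?sb //.
have -> : (index a Y == j) = false.
  by apply/negbTE; apply: contraNneq ji => Ej; apply/eqP/val_inj; rewrite /= Ej.
by rewrite mulr0.
Qed.


Lemma basis_size d b' : (e + size X <= d)%N ->
  quot_basis (fun g => g \is d.-homog) J b' -> size b' = size Y.
Proof.
move=> Hd [hb' [ind' span']].
have Hm : (size X <= d)%N by apply: leq_trans (leq_addl _ _) Hd.
have [b [sb [hb Hb]]] := @interp_seq d Y PX Hm YX.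
have YjX (j : 'I_(size Y)) : Y`_j \in X by apply: YX; apply: mem_nth.
have fYj (j : 'I_(size Y)) : f.@[Y`_j] = 0.
  by have := mem_nth 0 (ltn_ord j); rewrite memY => /andP[_ /eqP].
pose M : 'M[K]_(size b', size Y) := \matrix_(i, j) (b'`_i).@[Y`_j].
have Hfree : row_free M.
  apply: inj_row_free => v Hv; apply/rowP => i; rewrite mxE.
  apply: (ind' (fun i => v 0 i)).
  apply: (J_of_vanish Hd).
    by apply: rpred_sum => k _; apply: rpredZ; apply: hb'; apply: mem_nth.
  move=> a aX fa; have aY : a \in Y by rewrite memY aX fa eqxx.
  have kY : (index a Y < size Y)%N by rewrite index_mem.
  transitivity ((v *m M) 0 (Ordinal kY)); last by rewrite Hv mxE.
  rewrite mxE meval_sum; apply: eq_bigr => k _.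
  by rewrite mevalZ mxE /= nth_index.
have Hfull : row_full M.
  apply/row_fullP.
  have Hc : forall j : 'I_(size Y), exists c : 'I_(size b') -> K,
      J (b`_j - \sum_(i < size b') c i *: b'`_i).
    by move=> j; apply: span'; apply: hb; apply: mem_nth; rewrite sb.
  pose C j := proj1_sig (constructive_indefinite_description _ (Hc j)).
  have HC (j : 'I_(size Y)) : J (b`_j - \sum_(i < size b') C j i *: b'`_i).
    exact: (proj2_sig (constructive_indefinite_description _ (Hc j))).
  exists (\matrix_(j, i) C j i); apply/matrixP => j j'; rewrite !mxE.
  have := J_vanish (HC j) (YjX j') (fYj j').
  rewrite mevalB Hb -?sb // meval_sum => /eqP; rewrite subr_eq0 => /eqP H.
  rewrite nthY // in H.
  have -> : (j == j') = (j' == j :> nat) by rewrite eq_sym.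
  by rewrite H; apply: eq_bigr => i _; rewrite mevalZ; congr (_ * _); rewrite mxE.
move: Hfree Hfull; rewrite /row_free /row_full => /eqP H1' /eqP H2'.
exact: (etrans (esym H1') H2').
Qed.

Lemma hilbert_J d : (e + size X <= d)%N -> hilbert_fun J d = size Y.
Proof.
move=> Hd; rewrite /hilbert_fun.
set P := (fun m => _).
have [b [sb Hb]] := basis_exists Hd.
have Pm : exists m, P m by exists (size Y); exists b.
have [b' [<- Hq]] := epsilon_spec (inhabits 0%N) P Pm.
exact: basis_size Hd Hq.
Qed.

End Work.

Theorem lemma3p2 (K : fieldType) (s : nat) (X : seq {ffun 'I_s -> K})
    (f : {mpoly K[s]}) :
  proj_points X -> f != 0 -> homogeneous f ->
  ( ~ (forall h, colon (vanishing_ideal X) f h <-> vanishing_ideal X h) ->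
      degree_is (ideal_add (vanishing_ideal X) f) (card_zeros X f) ) /\
  ( (forall h, colon (vanishing_ideal X) f h <-> vanishing_ideal X h) ->
      card_zeros X f = 0%N ).
Proof.
move=> PX fn0 [e hf]; split.
  move=> Hcol.
  have [p0 [p0X fp0]] : exists p, p \in X /\ f.@[p] = 0.
    apply: NNPP => Hn; apply: Hcol; apply: (nozero_colon hf) => p pX.
    by apply/eqP => fp; apply: Hn; exists p.
  have Hnz : forall a, a \in X -> a != [ffun => 0] by case: PX.
  exists 1%N; split.
    split; first exact: (chain1 hf p0X fp0 (Hnz p0 p0X)).
    exact: no_chain2.
  move=> eps heps; exists (e + size X)%N => d Hd.
  rewrite (hilbert_J hf PX Hd) /card_zeros -size_filter.
  by rewrite expr0 divr1 fact0 mul1r subrr normr0.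
move=> Hcol; apply/eqP; rewrite -leqn0 leqNgt -has_count; apply/hasP => [[p pX /eqP fp]].
exact: (zero_colon hf PX pX fp Hcol).
Qed.
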